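(* Let $E$ be an extension of $\mathbb{Z}_\mathrm{max}$ and let $n$ be a positive integer. Then there is at most one subextension $L$ of $E$ (a subsemifield of $E$ containing the image of $\mathbb{Z}_\mathrm{max}$) such that $\mathrm{ui}(L/\mathbb{Z}_\mathrm{max})=n$.
   Context: A semifield is a commutative semiring in which every nonzero element is a unit. $\mathbb{Z}_\mathrm{max}=\mathbb{Z}\cup\{-\infty\}$ is the semifield with addition $\max$ and multiplication ordinary addition. An extension of a semifield $K$ is a semifield $E$ with an injective homomorphism $K\to E$. The unit index is $\mathrm{ui}(L/K)=|L^\times/K^\times|$. *)

(* Defs.v *)
From HB Require Import structures.
From mathcomp Require Import all_boot all_order all_algebra.
Set Implicit Arguments. Unset Strict Implicit. Unset Printing Implicit Defensive.
Import Order.TTheory GRing.Theory Num.Theory.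
Local Open Scope ring_scope.

(* -oo is represented by None, an integer k by Some k.                 *)
Definition Zmax := option int.
HB.instance Definition _ := Choice.on Zmax.

Definition zmax_add (x y : Zmax) : Zmax :=
  match x, y with
  | None, _ => y
  | _, None => x
  | Some a, Some b => Some (Num.max a b)
  end.

Definition zmax_mul (x y : Zmax) : Zmax :=
  match x, y with
  | Some a, Some b => Some (a + b)
  | _, _ => None
  end.

Lemma zmax_addA : associative zmax_add.
Proof. by case=> [a|] [b|] [c|] //=; rewrite maxA. Qed.
Lemma zmax_addC : commutative zmax_add.
Proof. by case=> [a|] [b|] //=; rewrite maxC. Qed.
Lemma zmax_add0 : left_id (None : Zmax) zmax_add.
Proof. by case. Qed.

HB.instance Definition _ := GRing.isNmodule.Build Zmax zmax_addA zmax_addC zmax_add0.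

Lemma zmax_mulA : associative zmax_mul.
Proof. by case=> [a|] [b|] [c|] //=; rewrite addrA. Qed.
Lemma zmax_mulC : commutative zmax_mul.
Proof. by case=> [a|] [b|] //=; rewrite addrC. Qed.
Lemma zmax_mul1 : left_id (Some 0 : Zmax) zmax_mul.
Proof. by case=> [a|] //=; rewrite add0r. Qed.
Lemma zmax_mulDl : left_distributive zmax_mul zmax_add.
Proof. by case=> [a|] [b|] [c|] //=; rewrite addr_maxl. Qed.
Lemma zmax_mul0 : left_zero (None : Zmax) zmax_mul.
Proof. by []. Qed.
Lemma zmax_one_neq0 : (Some 0 : Zmax) != None.
Proof. by []. Qed.

HB.instance Definition _ := GRing.Nmodule_isComNzSemiRing.Build Zmax
  zmax_mulA zmax_mulC zmax_mul1 zmax_mulDl zmax_mul0 zmax_one_neq0.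

Definition is_semifield (K : comNzSemiRingType) : Prop :=
  forall x : K, x != 0 -> exists y : K, x * y = 1.

Definition is_subsemifield (E : comNzSemiRingType) (L : E -> Prop) : Prop :=
  [/\ L 0, L 1,
      (forall x y, L x -> L y -> L (x + y)),
      (forall x y, L x -> L y -> L (x * y)) &
      (forall x, L x -> x != 0 -> exists2 y, L y & x * y = 1)].

Definition is_subextension (E : comNzSemiRingType) (f : {rmorphism Zmax -> E})
    (L : E -> Prop) : Prop :=
  is_subsemifield L /\ (forall z : Zmax, L (f z)).

(* Two units x, y of L are in the same coset of f(Zmax^x) = f(Z) in L^x
   iff x = y * f(k) for some integer k. *)
Definition same_coset (E : comNzSemiRingType) (f : {rmorphism Zmax -> E})
    (x y : E) : Prop :=
  exists k : int, x = y * f (Some k).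

(* ui(L/Zmax) = n, i.e. the group L^x / f(Zmax^x) has exactly n elements:
   there are n pairwise distinct cosets r_0, ..., r_{n-1} of units of L
   which cover all of L^x. *)
Definition unit_index_eq (E : comNzSemiRingType) (f : {rmorphism Zmax -> E})
    (L : E -> Prop) (n : nat) : Prop :=
  exists r : 'I_n -> E,
    [/\ (forall i, L (r i) /\ r i != 0),
        (forall i j, same_coset f (r i) (r j) -> i = j) &
        (forall x, L x -> x != 0 -> exists i, same_coset f x (r i))].

(* Main.v *)
Require Import Defs.
From HB Require Import structures.
From mathcomp Require Import all_boot all_order all_algebra.
From mathcomp Require Import ring.
Import GRing.Theory.
Local Open Scope ring_scope.
Set Implicit Arguments.

Lemma tD (E : comNzSemiRingType) (f : {rmorphism Zmax -> E}) a b :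
  f (Some a) * f (Some b) = f (Some (a + b)).
Proof. by rewrite -rmorphM. Qed.
Lemma t0 (E : comNzSemiRingType) (f : {rmorphism Zmax -> E}) : f (Some 0) = 1.
Proof. exact: rmorph1. Qed.
Lemma tV (E : comNzSemiRingType) (f : {rmorphism Zmax -> E}) a :
  f (Some a) * f (Some (- a)) = 1.
Proof. by rewrite tD subrr t0. Qed.
Lemma tX (E : comNzSemiRingType) (f : {rmorphism Zmax -> E}) a (n : nat) :
  f (Some a) ^+ n = f (Some (a *+ n)).
Proof.
elim: n => [|n IH]; first by rewrite expr0 mulr0n t0.
by rewrite exprS IH tD mulrS.
Qed.
Lemma tinj (E : comNzSemiRingType) (f : {rmorphism Zmax -> E}) :
  injective f -> forall a b, f (Some a) = f (Some b) -> a = b.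
Proof. by move=> hf a b /hf [] . Qed.
Lemma tneq0 (E : comNzSemiRingType) (f : {rmorphism Zmax -> E}) a :
  f (Some a) != 0.
Proof.
apply/eqP => h; have := tV f a; rewrite h mul0r => /eqP; by rewrite eq_sym oner_eq0.
Qed.
Lemma idem (E : comNzSemiRingType) (f : {rmorphism Zmax -> E}) (x : E) : x + x = x.
Proof.
have h : (1 + 1 : E) = 1 by rewrite -(rmorph1 f) -rmorphD.
by rewrite -{1 2}(mulr1 x) -mulrDr h mulr1.
Qed.
Lemma zsf (E : comNzSemiRingType) (f : {rmorphism Zmax -> E}) (a b : E) :
  a + b = 0 -> a = 0.
Proof.
move=> h; have : a + (a + b) = a by rewrite h addr0.
by rewrite addrA (idem f) h.
Qed.
Lemma nzd (E : comNzSemiRingType) (hE : is_semifield E) (a b : E) :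
  a != 0 -> b != 0 -> a * b != 0.
Proof.
move=> ha hb; apply/eqP => h; case: (hE a ha) => c hc.
move/eqP: hb; apply; by rewrite -[b]mul1r -hc mulrAC h mul0r.
Qed.
Lemma canc (E : comNzSemiRingType) (hE : is_semifield E) (a b c : E) :
  a != 0 -> a * b = a * c -> b = c.
Proof.
move=> ha h; case: (hE a ha) => d hd.
by rewrite -[b]mul1r -[c]mul1r -hd mulrAC h mulrAC.
Qed.
Lemma expnz (E : comNzSemiRingType) (hE : is_semifield E) (a : E) n :
  a != 0 -> a ^+ n != 0.
Proof.
move=> ha; elim: n => [|n IH]; first by rewrite expr0 oner_eq0.
by rewrite exprS nzd.
Qed.
Lemma root1 (E : comNzSemiRingType) (f : {rmorphism Zmax -> E}) (hE : is_semifield E)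
  (z : E) (n : nat) : (0 < n)%N -> z ^+ n = 1 -> z = 1.
Proof.
case: n => // m _ hz.
set w := \sum_(i < m.+1) z ^+ i.
have hw : w = 1 + \sum_(i < m) z ^+ i.+1 by rewrite /w big_ord_recl expr0.
have zw : z * w = w.
  rewrite {2}hw /w mulr_sumr big_ord_recr /= -exprS hz addrC.
  by congr (_ + _); apply: eq_bigr => i _; rewrite exprS.
have wn : w != 0 by apply/eqP; rewrite hw => /(zsf f) /eqP; rewrite oner_eq0.
by apply: (canc hE _ _ _ wn); rewrite mulrC zw mulr1.
Qed.
Lemma uroot (E : comNzSemiRingType) (f : {rmorphism Zmax -> E}) (hE : is_semifield E)
  (x y : E) (n : nat) : (0 < n)%N -> y != 0 -> x ^+ n = y ^+ n -> x = y.
Proof.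
move=> hn hy h; case: (hE y hy) => y' hy'.
have : (x * y') ^+ n = 1 by rewrite exprMn h -exprMn hy' expr1n.
move/(root1 f hE _ _ hn) => e.
by rewrite -[x]mulr1 -hy' mulrCA e mulr1.
Qed.

Lemma lagrange (E : comNzSemiRingType) (f : {rmorphism Zmax -> E}) (hE : is_semifield E)
   n (L : E -> Prop) : is_subextension f L -> unit_index_eq f L n ->
  forall x, L x -> x != 0 -> exists k, x ^+ n = f (Some k).
Proof.
move=> [[L0 L1 LD LM LV] Lf] [r [hr hinj hcov]] x Lx xn.
have : forall i, exists p : 'I_n * int, x * r i = r p.1 * f (Some p.2).
  move=> i; have [Li ri0] := hr i.
  have [j [k hk]] := hcov (x * r i) (LM _ _ Lx Li) (nzd hE _ _ xn ri0).
  by exists (j, k).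
case/fin_all_exists => g hg.
pose s := fun i => (g i).1; pose c := fun i => (g i).2.
have hg' : forall i, x * r i = r (s i) * f (Some (c i)) by exact: hg.
have sinj : injective s.
  move=> i j e; apply: hinj; exists (c i - c j).
  apply: (canc hE _ _ _ xn).
  apply: (canc hE (f (Some (c j))) _ _ (tneq0 f _)).
  rewrite hg' (mulrA x) hg' e.
  have -> : f (Some (c i)) = f (Some (c i - c j)) * f (Some (c j)) by rewrite tD subrK.
  ring.
pose P := \prod_(i < n) r i.
have P0 : P != 0.
  apply: (big_ind (fun y => y != 0)); first by rewrite oner_eq0.
    by move=> a b; apply: nzd.
  by move=> i _; case: (hr i).
have : \prod_(i < n) (x * r i) = \prod_(i < n) (r (s i) * f (Some (c i))).
  by apply: eq_bigr => i _; rewrite hg'.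
rewrite !big_split /= prodr_const card_ord.
have -> : \prod_(i < n) r (s i) = P.
  rewrite /P [RHS](reindex_inj sinj); exact: eq_big.
have -> : \prod_(i < n) f (Some (c i)) = f (Some (\sum_(i < n) c i)).
  by rewrite (big_morph (fun k => f (Some k)) (fun a b => esym (tD f a b)) (t0 f)).
move=> h; exists (\sum_(i < n) c i).
by apply: (canc hE _ _ _ P0); rewrite mulrC h mulrC.
Qed.

Lemma modeq (a b d : int) : (a %% d)%Z = (b %% d)%Z ->
  a = b + ((a %/ d)%Z - (b %/ d)%Z) * d.
Proof.
move=> h; have ha := divz_eq a d; have hb := divz_eq b d.
rewrite {1}ha {1}hb h; ring.
Qed.

Lemma tXn (E : comNzSemiRingType) (f : {rmorphism Zmax -> E}) q (n : nat) :
  f (Some q) ^+ n = f (Some (q * n%:Z)).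
Proof. by rewrite tX -mulr_natr natz. Qed.

Lemma modlt (a : int) (m : nat) : (`|(a %% m.+1)%Z| < m.+1)%N.
Proof.
have h0 : (0 <= (a %% m.+1)%Z)%R by apply: modz_ge0.
rewrite -ltz_nat gez0_abs //; exact: ltz_pmod.
Qed.

Lemma root_ex (E : comNzSemiRingType) (f : {rmorphism Zmax -> E}) (hE : is_semifield E)
   n (L : E -> Prop) : (0 < n)%N -> is_subextension f L -> unit_index_eq f L n ->
  exists s, L s /\ s ^+ n = f (Some 1).
Proof.
move=> hn hL hU; have hlag := lagrange hE hL hU.
move: hL hU => [[L0 L1 LD LM LV] Lf] [r [hr hinj hcov]].
have : forall i, exists k, r i ^+ n = f (Some k).
  by move=> i; case: (hr i) => Li ri0; exact: hlag.
case/fin_all_exists => e he.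
case: n hn r hr hinj hcov e he {hlag} => // m _ r hr hinj hcov e he.
pose g := fun i : 'I_m.+1 => (inord `|(e i %% m.+1)%Z| : 'I_m.+1).
have ginj : injective g.
  move=> i j /(congr1 val); rewrite /g /= !inordK ?modlt //.
  move=> habs.
  have hm : (e i %% m.+1)%Z = (e j %% m.+1)%Z.
    by rewrite -(gez0_abs (modz_ge0 _ _)) // habs gez0_abs // modz_ge0.
  have := modeq _ _ _ hm; set q := (_ - _)%R => heq.
  apply: hinj; exists q.
  apply: (uroot f hE _ _ m.+1) => //.
    by apply: (nzd hE); [case: (hr j) | exact: tneq0].
  by rewrite exprMn he he tXn tD -heq.
have := injF_onto ginj (inord `|(1 %% m.+1)%Z|).
case/codomP => i hi.
move: hi => /(congr1 val); rewrite /g /= !inordK ?modlt // => habs.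
have hm : (e i %% m.+1)%Z = (1 %% m.+1)%Z.
  by rewrite -(gez0_abs (modz_ge0 _ _)) // -habs gez0_abs // modz_ge0.
have := modeq _ _ _ hm; set q := (_ - _)%R => heq.
exists (r i * f (Some (- q))); split.
  by apply: LM; [case: (hr i) | apply: Lf].
by rewrite exprMn he tXn tD heq; congr (f (Some _)); ring.
Qed.

Lemma incl (E : comNzSemiRingType) (f : {rmorphism Zmax -> E}) (hE : is_semifield E)
   n (L1 L2 : E -> Prop) : (0 < n)%N ->
  is_subextension f L1 -> unit_index_eq f L1 n ->
  is_subextension f L2 -> unit_index_eq f L2 n ->
  forall x, L1 x -> L2 x.
Proof.
move=> hn h1 u1 h2 u2.
have [s1 [Ls1 hs1]] := root_ex hE hn h1 u1.
have [s2 [Ls2 hs2]] := root_ex hE hn h2 u2.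
have s2n : s2 != 0.
  apply/eqP => h; move: hs2; rewrite h expr0n; case: eqP => [hn0|_].
    by rewrite hn0 in hn.
  by move=> /esym/eqP; rewrite (negbTE (tneq0 f _)).
have e : s1 = s2 by apply: (uroot f hE _ _ n hn s2n); rewrite hs1 hs2.
move: h2 => [[L0 L1' LD LM LV] Lf].
move=> x Lx; case: (x =P 0) => [-> // | /eqP xn].
have [k hk] := lagrange hE h1 u1 _ Lx xn.
pose q := (k %/ n)%Z; pose rr := `|(k %% n)%Z|%N.
have -> : x = s2 ^+ rr * f (Some q).
  apply: (uroot f hE _ _ n hn).
    by apply: (nzd hE); [exact: expnz | exact: tneq0].
  rewrite exprMn -exprM mulnC exprM hs2 tX tXn tD hk; congr (f (Some _)).
  rewrite /rr -mulr_natr mul1r natz gez0_abs; last first.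
    by apply: modz_ge0; rewrite eqz_nat -lt0n.
  by rewrite addrC -divz_eq.
apply: (LM); last exact: Lf.
elim: rr => [|j IH]; first by rewrite expr0.
by rewrite exprS; apply: (LM).
Qed.

Unset Implicit Arguments.

Theorem mainTheorem7 (E : comNzSemiRingType) (f : {rmorphism Zmax -> E})
    (hE : is_semifield E) (hf : injective f) (n : nat) (hn : (0 < n)%N)
    (L1 L2 : E -> Prop) :
  is_subextension f L1 -> unit_index_eq f L1 n ->
  is_subextension f L2 -> unit_index_eq f L2 n ->
  forall x : E, L1 x <-> L2 x.
Proof.
move=> h1 u1 h2 u2 x; split.
  exact: (incl hE hn h1 u1 h2 u2).
exact: (incl hE hn h2 u2 h1 u1).
Qed.
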